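(* Consider the Coxeter diagram $D$ with seven nodes $1,\dots,7$ forming the cycle $6-5-4-3-2-1-7-6$, with edge labels $m_{65}=4$, $m_{54}=4$, $m_{43}=6$, $m_{32}=4$, $m_{21}=\infty$, $m_{17}=4$, $m_{76}=6$, and all other pairs of nodes non-adjacent (i.e. $m_{ij}=2$). Then $D$ is the Coxeter diagram of a finite-volume hyperbolic Coxeter $4$-polytope $P_0$ which (a) has exactly one ideal vertex, and (b) has the property that whenever a bounded facet and an unbounded facet intersect, their dihedral angle is $\pi/(2k)$ for some $k\in\mathbb{N}$. Moreover, the horospherical link of the unique ideal vertex of $P_0$ is a Euclidean right prism over a triangle with inner angles $\pi/2,\pi/4,\pi/4$, and its Coxeter diagram is the subdiagram of $D$ spanned by the nodes $1,2,4,5,6$.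
   Context: A hyperbolic Coxeter polytope is a finite convex polytope in $\mathbb{H}^n$ all of whose dihedral angles are integral submultiples of $\pi$. Its Coxeter diagram has one node per bounding hyperplane; nodes $i,j$ are joined by an edge labelled $m_{ij}$ if the hyperplanes meet at dihedral angle $\pi/m_{ij}$, with label $\infty$ if they are tangent at infinity, no edge if $m_{ij}=2$, and a dashed edge if they are ultraparallel (there are no dashed edges in $D$). *)

(* Defs.v *)
From mathcomp Require Import all_boot all_order all_algebra.
From mathcomp Require Import all_classical all_reals all_analysis.
Set Implicit Arguments. Unset Strict Implicit. Unset Printing Implicit Defensive.
Import Order.TTheory GRing.Theory Num.Theory.
Import numFieldNormedType.Exports.
Local Open Scope classical_set_scope.
Local Open Scope ring_scope.

(* Hyperboloid model of H^4 in Minkowski space R^{4,1}.                      *)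
Section Hyperbolic.
Variable R : realType.
Implicit Types (x y v a b : 'rV[R]_5) (e : 'I_7 -> 'rV[R]_5).

Definition lor x y : R :=
  \sum_(k < 5) (if val k == 4%N then - 1 else 1) * x ord0 k * y ord0 k.

Definition H4 : set 'rV[R]_5 := [set x | lor x x = -1 /\ 0 < x ord0 (inord 4)].

(* representatives of the points of the ideal boundary (future light cone) *)
Definition ideal_bdry : set 'rV[R]_5 :=
  [set v | lor v v = 0 /\ 0 < v ord0 (inord 4)].

(* the polytope bounded by the hyperplanes e i^perp, with outward normals e i *)
Definition hpoly e : set 'rV[R]_5 := [set x | H4 x /\ forall i, lor x (e i) <= 0].

Definition facet e (i : 'I_7) : set 'rV[R]_5 := [set x | hpoly e x /\ lor x (e i) = 0].

(* hpoly e is a genuine 4-dimensional polytope and each hyperplane e i^perp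
   carries a genuine (3-dimensional) facet: the relative interior of the
   facet is nonempty. *)
Definition irredundant_polytope e : Prop :=
  (exists x, H4 x /\ forall i, lor x (e i) < 0) /\
  (forall i, exists x, H4 x /\ lor x (e i) = 0 /\
                       forall j, j != i -> lor x (e j) < 0).

Definition hyps_meet (f g : 'rV[R]_5) : Prop :=
  exists x, H4 x /\ lor x f = 0 /\ lor x g = 0.

Definition meet_at_angle (f g : 'rV[R]_5) (theta : R) : Prop :=
  hyps_meet f g /\ lor f g = - cos theta.

Definition tangent_at_infinity (f g : 'rV[R]_5) : Prop :=
  ~ hyps_meet f g /\ exists v, ideal_bdry v /\ lor v f = 0 /\ lor v g = 0.

(* Coxeter diagrams on 7 nodes: label Some m for dihedral angle pi/m
   (m = 2 means "no edge"), None for label infinity. *)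
Definition diagram7 := 'I_7 -> 'I_7 -> option nat.

Definition coxeter_polytope_with_diagram e (D : diagram7) : Prop :=
  (forall i, lor (e i) (e i) = 1) /\
  irredundant_polytope e /\
  (forall i j, i != j ->
     match D i j with
     | Some m => meet_at_angle (e i) (e j) (pi / m%:R)
     | None => tangent_at_infinity (e i) (e j)
     end).

Definition leb4 :=
  (((@lebesgue_measure R) \x (@lebesgue_measure R)) \x (@lebesgue_measure R)
     \x (@lebesgue_measure R))%E.

(* the point (y1,y2,y3,y4,1) of R^{4,1} over the point y of the Klein ball *)
Definition klein_lift (p : R * R * R * R) : 'rV[R]_5 :=
  \row_(k < 5) nth 1 [:: p.1.1.1; p.1.1.2; p.1.2; p.2] k.

Definition klein_set e : set (R * R * R * R) :=
  [set p | lor (klein_lift p) (klein_lift p) < 0 /\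
           forall i, lor (klein_lift p) (e i) <= 0].

(* hyperbolic volume density in the Klein model: (1 - |y|^2)^(-5/2) *)
Definition klein_density (p : R * R * R * R) : R :=
  (Num.sqrt ((- lor (klein_lift p) (klein_lift p)) ^+ 5))^-1.

Definition hvolume e : \bar R :=
  (\int[leb4]_(p in klein_set e) (klein_density p)%:E)%E.

Definition finite_volume e : Prop := (hvolume e < +oo)%E.

(* closure of hpoly e in the closed Klein ball (points normalized x5 = 1) *)
Definition klein_closure e : set 'rV[R]_5 :=
  [set x : 'rV[R]_5 | x ord0 (inord 4) = 1 /\ lor x x <= 0 /\ forall i, lor x (e i) <= 0].

Definition ideal_vertex e v : Prop :=
  klein_closure e v /\ lor v v = 0 /\
  forall a b (t : R), klein_closure e a -> klein_closure e b ->
    0 < t < 1 -> v = t *: a + (1 - t) *: b -> a = b.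

(* a subset of H^4 is bounded: cosh of the hyperbolic distance, -<x,y>,
   is bounded on it *)
Definition hbounded (S : set 'rV[R]_5) : Prop :=
  exists M : R, forall x y, S x -> S y -> - lor x y <= M.

Definition even_angles_bounded_unbounded e : Prop :=
  forall i j, hbounded (facet e i) -> ~ hbounded (facet e j) ->
    facet e i `&` facet e j !=set0 ->
    exists k : nat, (0 < k)%N /\ meet_at_angle (e i) (e j) (pi / (2 * k)%:R).

Definition horosphere v (c : R) : set 'rV[R]_5 := [set x | H4 x /\ lor x v = - c].

Definition edist3 (p q : 'rV[R]_3) : R :=
  Num.sqrt (\sum_(k < 3) (p ord0 k - q ord0 k) ^+ 2).

(* intrinsic (flat) distance of the horosphere: for x, y on a horosphere
   it equals 2 sinh(d(x,y)/2) = sqrt(<x-y,x-y>) *)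
Definition horo_dist x y : R := Num.sqrt (lor (x - y) (x - y)).

Definition c0 (p : 'rV[R]_3) := p ord0 (inord 0).
Definition c1 (p : 'rV[R]_3) := p ord0 (inord 1).
Definition c2 (p : 'rV[R]_3) := p ord0 (inord 2).

(* right prism of height h over the triangle with legs a, i.e. the triangle
   with angles pi/2, pi/4, pi/4 *)
Definition prism (a h : R) : set 'rV[R]_3 :=
  [set p | 0 <= c0 p /\ 0 <= c1 p /\ c0 p + c1 p <= a /\ 0 <= c2 p <= h].

(* The horospherical link of the ideal vertex v (cut by any sufficiently small
   horosphere) is, via an isometry of the horosphere onto E^3, the right prism
   over the (pi/2,pi/4,pi/4)-triangle; the link's facets are the traces of the
   facets 1,2,4,5,6 of the polytope (indices 0,1,3,4,5): nodes 1 and 2 give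
   the two triangular ends, nodes 4 and 6 the two legs, node 5 the hypotenuse
   face; facets 3 and 7 (indices 2, 6) do not meet the horosphere. *)
Definition link_is_prism e v : Prop :=
  exists cmax : R, 0 < cmax /\ forall c : R, 0 < c < cmax ->
  exists (f : 'rV[R]_5 -> 'rV[R]_3) (a h : R),
    (0 < a /\ 0 < h) /\
    (forall x y, horosphere v c x -> horosphere v c y ->
                 edist3 (f x) (f y) = horo_dist x y) /\
    f @` horosphere v c = setT /\
    f @` (horosphere v c `&` hpoly e) = prism a h /\
    f @` (horosphere v c `&` facet e (inord 0)) = prism a h `&` [set p | c2 p = 0] /\
    f @` (horosphere v c `&` facet e (inord 1)) = prism a h `&` [set p | c2 p = h] /\
    f @` (horosphere v c `&` facet e (inord 3)) = prism a h `&` [set p | c0 p = 0] /\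
    f @` (horosphere v c `&` facet e (inord 5)) = prism a h `&` [set p | c1 p = 0] /\
    f @` (horosphere v c `&` facet e (inord 4)) = prism a h `&` [set p | c0 p + c1 p = a] /\
    horosphere v c `&` facet e (inord 2) = set0 /\
    horosphere v c `&` facet e (inord 6) = set0.

End Hyperbolic.

(* The Coxeter diagram D of the paper; node k of the paper is index k-1:
   cycle 6-5-4-3-2-1-7-6 with m65 = 4, m54 = 4, m43 = 6, m32 = 4, m21 = oo,
   m17 = 4, m76 = 6, all other m_ij = 2. *)
Definition Dpaper : diagram7 := fun i j =>
  let adj (a b : nat) := ((val i == a) && (val j == b)) || ((val i == b) && (val j == a)) in
  if [|| adj 5 4, adj 4 3, adj 2 1 | adj 0 6]%N then Some 4%N
  else if adj 3 2 || adj 6 5 then Some 6%N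
  else if adj 1 0 then None
  else Some 2%N.

(* Main.v *)
Require Import Defs.
From mathcomp Require Import all_boot all_order all_algebra.
From mathcomp Require Import all_classical all_reals all_analysis.
From mathcomp Require Import ring lra.
Import Order.TTheory GRing.Theory Num.Theory.
Import numFieldNormedType.Exports.
Local Open Scope classical_set_scope.
Local Open Scope ring_scope.

(* Explicit polytope: outward normals e0..e6 in R^{4,1} with the ideal vertex
   v0 = (0,0,0,1,1); "cusp coordinates" x = cp a b z s t. *)

Section S.
Variable R : realType.
Implicit Types x y : 'rV[R]_5.
Local Notation "x @@ k" := (x ord0 (inord k)) (at level 8).

Lemma lorE x y : lor x y =
  x@@0 * y@@0 + x@@1 * y@@1 + x@@2 * y@@2 + x@@3 * y@@3 - x@@4 * y@@4.
Proof.
rewrite /lor.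
rewrite (eq_bigr (fun k : 'I_5 => (if val k == 4%N then -1 else 1) * x@@(val k) * y@@(val k))); last first.
  by move=> k _; rewrite inord_val.
rewrite -(big_mkord xpredT (fun k => (if k == 4%N then -1 else 1) * x@@k * y@@k)).
rewrite !big_nat_recl // big_geq //=.
ring.
Qed.

Definition mk5 (a b c d t : R) : 'rV[R]_5 := \row_(k < 5) nth 0 [:: a; b; c; d; t] k.

Lemma mk5E a b c d t :
  [/\ (mk5 a b c d t)@@0 = a, (mk5 a b c d t)@@1 = b, (mk5 a b c d t)@@2 = c,
      (mk5 a b c d t)@@3 = d & (mk5 a b c d t)@@4 = t].
Proof. by rewrite /mk5 !mxE !inordK. Qed.

Lemma lor_mk5 a b c d t a' b' c' d' t' :
  lor (mk5 a b c d t) (mk5 a' b' c' d' t') = a*a' + b*b' + c*c' + d*d' - t*t'.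
Proof. by rewrite lorE; case: (mk5E a b c d t) => -> -> -> -> ->; case: (mk5E a' b' c' d' t') => -> -> -> -> ->. Qed.

End S.
Arguments mk5 {R}.
Arguments mk5E {R}. Arguments lor_mk5 {R}. Arguments lorE {R}.

Section S.
Variable R : realType.
Definition s2 : R := Num.sqrt 2.
Definition s3 : R := Num.sqrt 3.
Lemma s2sq : s2 ^+ 2 = 2. Proof. by rewrite sqr_sqrtr. Qed.
Lemma s3sq : s3 ^+ 2 = 3. Proof. by rewrite sqr_sqrtr. Qed.
Lemma s2gt0 : 0 < s2. Proof. by rewrite sqrtr_gt0. Qed.
Lemma s3gt0 : 0 < s3. Proof. by rewrite sqrtr_gt0. Qed.
Definition hh := s2 * s3 / 3.
Definition e0 : 'rV[R]_5 := mk5 0 0 (-1) 0 0.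
Definition e1 : 'rV[R]_5 := mk5 0 0 1 hh hh.
Definition e2 : 'rV[R]_5 := mk5 (s3/2) 0 0 (-(s3/3)) (s3/6).
Definition e3 : 'rV[R]_5 := mk5 (-1) 0 0 0 0.
Definition e4 : 'rV[R]_5 := mk5 (s2/2) (s2/2) 0 (s2/2) (s2/2).
Definition e5 : 'rV[R]_5 := mk5 0 (-1) 0 0 0.
Definition e6 : 'rV[R]_5 := mk5 0 (s3/2) (s2/2) (-(s3/6)) (s3/3).
Lemma sfacts : [/\ s2 ^+ 2 = 2, s3 ^+ 2 = 3, s2 * s3 ^+ 2 = 3 * s2, s3 * s2 ^+ 2 = 2 * s3 &
  [/\ s2 ^+ 2 * s3 ^+ 2 = 6, s2 ^+ 3 = 2 * s2 & s3 ^+ 3 = 3 * s3]].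
Proof.
have a1 : s2 * s3 ^+ 2 = 3 * s2 by rewrite s3sq mulrC.
have a2 : s3 * s2 ^+ 2 = 2 * s3 by rewrite s2sq mulrC.
have a3 : s2 ^+ 2 * s3 ^+ 2 = 6 by rewrite s2sq s3sq; ring.
have a4 : s2 ^+ 3 = 2 * s2 by rewrite exprS s2sq mulrC.
have a5 : s3 ^+ 3 = 3 * s3 by rewrite exprS s3sq mulrC.
by split; [exact: s2sq|exact: s3sq|exact: a1|exact: a2|split].

Qed.
Ltac sq := have [? ? ? ? [? ? ?]] := sfacts; lra.
Lemma t11 : lor e1 e1 = 1.
Proof. rewrite /e1 lor_mk5; ring. Qed.
Lemma t22 : lor e2 e2 = 1.
Proof. rewrite /e2 lor_mk5. have := s3sq. lra. Qed.
Lemma t12 : lor e1 e2 = - (s2/2).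
Proof. rewrite /e1 /e2 lor_mk5 /hh. sq. Qed.
Lemma t66 : lor e6 e6 = 1.
Proof. rewrite /e6 lor_mk5. have := s3sq; have := s2sq. lra. Qed.
End S.
Arguments s2 {R}. Arguments s3 {R}. Arguments hh {R}.
Arguments e0 {R}. Arguments e1 {R}. Arguments e2 {R}. Arguments e3 {R}.
Arguments e4 {R}. Arguments e5 {R}. Arguments e6 {R}.

Section S.
Variable R : realType.
Local Notation "x @@ k" := (x ord0 (inord k)) (at level 8).
Ltac sq := (field: (@s2sq R) (@s3sq R)); try done.

Definition E (i : 'I_7) : 'rV[R]_5 :=
  match val i with 0 => e0 | 1 => e1 | 2 => e2 | 3 => e3 | 4 => e4 | 5 => e5 | _ => e6 end.

Definition cp (y0 y1 z s t : R) : 'rV[R]_5 := mk5 y0 y1 (hh * z) (t - s) t.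

Definition cc (i : nat) : R :=
  match i with 0 => hh | 1 => hh | 2 => s3/6 | 3 => 1 | 4 => s2/2 | 5 => 1 | _ => s3/6 end.
Definition LL (i : nat) (y0 y1 z s t : R) : R :=
  match i with 0 => - z | 1 => z - s | 2 => 3*y0 + 2*s - 3*t | 3 => - y0
  | 4 => y0 + y1 - s | 5 => - y1 | _ => 3*y1 + 2*z + s - 3*t end.

Lemma hh_gt0 : 0 < hh :> R.
Proof. by rewrite /hh !mulr_gt0 ?s2gt0 ?s3gt0. Qed.

Lemma cc_gt0 i : 0 < cc i.
Proof.
have h2 := @s2gt0 R; have h3 := @s3gt0 R; have := hh_gt0.
by case: i => [|[|[|[|[|[|i]]]]]] /= *; lra.
Qed.

Lemma lor_cp_E (i : 'I_7) y0 y1 z s t :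
  lor (cp y0 y1 z s t) (E i) = cc i * LL i y0 y1 z s t.
Proof.
rewrite /cp /E /cc /LL; case: i => [[|[|[|[|[|[|[|i]]]]]]] Hi] //=;
 rewrite ?/e0 ?/e1 ?/e2 ?/e3 ?/e4 ?/e5 ?/e6 lor_mk5 ?/hh; sq.
Qed.

Lemma lor_cp_cp y0 y1 z s t :
  lor (cp y0 y1 z s t) (cp y0 y1 z s t) = y0^+2 + y1^+2 + 2/3 * z^+2 + s^+2 - 2*t*s.
Proof. rewrite /cp lor_mk5 /hh; sq. Qed.

Lemma vecE (x : 'rV[R]_5) : x = mk5 (x@@0) (x@@1) (x@@2) (x@@3) (x@@4).
Proof.
apply/rowP => k; rewrite /mk5 mxE.
case: k => [[|[|[|[|[|k]]]]] Hk] //=; congr (x _ _); apply/val_inj; rewrite /= inordK //.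
Qed.

Lemma cpE (x : 'rV[R]_5) : x = cp (x@@0) (x@@1) (x@@2 / hh) (x@@4 - x@@3) (x@@4).
Proof.
rewrite /cp {1}[x]vecE; congr mk5.
  by rewrite mulrC divfK // gt_eqF // hh_gt0.
ring.
Qed.

Lemma E_unit i : lor (E i) (E i) = 1.
Proof.
rewrite /E; case: i => [[|[|[|[|[|[|[|i]]]]]]] Hi] //=;
 rewrite ?/e0 ?/e1 ?/e2 ?/e3 ?/e4 ?/e5 ?/e6 lor_mk5 ?/hh; sq.
Qed.

End S.
Arguments E {R}. Arguments cp {R}. Arguments cc {R}. Arguments LL {R}.
Arguments lor_cp_E {R}. Arguments lor_cp_cp {R}. Arguments vecE {R}. Arguments cpE {R}.

Set Implicit Arguments. Unset Strict Implicit.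
Section S.
Variable R : realType.
Local Notation "x @@ k" := (x ord0 (inord k)) (at level 8).

Lemma lorZl (a : R) (p y : 'rV[R]_5) : lor (a *: p) y = a * lor p y.
Proof. rewrite !lorE !mxE; ring. Qed.

Lemma lorC (p y : 'rV[R]_5) : lor p y = lor y p.
Proof. rewrite !lorE; ring. Qed.

Definition qq (y0 y1 z s : R) := 2*s - s^+2 - y0^+2 - y1^+2 - 2/3 * z^+2.

Lemma klein_wit (y0 y1 z s : R) : 0 < qq y0 y1 z s ->
  exists x : 'rV[R]_5, exists k : R, 0 < k /\ H4 x /\
    forall i : 'I_7, lor x (@E R i) = (k * cc i) * LL i y0 y1 z s 1.
Proof.
move=> hq; set p := cp y0 y1 z s 1.
have hp : lor p p = - qq y0 y1 z s by rewrite /p lor_cp_cp /qq; ring.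
have hs : 0 < Num.sqrt (qq y0 y1 z s) by rewrite sqrtr_gt0.
exists ((Num.sqrt (qq y0 y1 z s))^-1 *: p), (Num.sqrt (qq y0 y1 z s))^-1.
split; first by rewrite invr_gt0.
split; last by move=> i; rewrite lorZl /p lor_cp_E mulrA.
split.
  rewrite lorZl lorC lorZl hp mulrA -expr2 exprVn sqr_sqrtr ?(ltW hq) //.
  by rewrite mulrN mulVf // gt_eqF.
rewrite mxE /p /cp; case: (mk5E y0 y1 (hh * z) (1 - s) 1) => _ _ _ _ ->.
by rewrite mulr1 invr_gt0.
Qed.

Lemma meet_wit (i j : 'I_7) (y0 y1 z s : R) : 0 < qq y0 y1 z s ->
  LL i y0 y1 z s 1 = 0 -> LL j y0 y1 z s 1 = 0 -> hyps_meet (@E R i) (@E R j).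
Proof.
move=> hq hi hj; have [x [k [hk [hx hl]]]] := klein_wit hq.
by exists x; rewrite !hl hi hj !mulr0.
Qed.

Lemma hyps_meetC (f g : 'rV[R]_5) : hyps_meet f g -> hyps_meet g f.
Proof. by move=> [x [? [? ?]]]; exists x. Qed.

Ltac W a b c d := apply: (@meet_wit _ _ (a:R) (b:R) (c:R) (d:R)); rewrite ?/qq /=; lra.
Ltac WW := first [ W (1/3 : R) (0 : R) (0 : R) (1 : R) | W (0 : R) (0 : R) (0 : R) (1 : R) | W (1/2 : R) (1/2 : R) (0 : R) (1 : R) | W (0 : R) (2/3 : R) (0 : R) (1 : R) | W (1/3 : R) (0 : R) (1 : R) (1 : R) | W (0 : R) (0 : R) (1 : R) (1 : R) | W (1/4 : R) (1/4 : R) (1/2 : R) (1/2 : R) | W (0 : R) (1/2 : R) (1/2 : R) (1/2 : R) | W (0 : R) (0 : R) (0 : R) (3/2 : R) | W (1/3 : R) (2/3 : R) (0 : R) (1 : R) | W (0 : R) (1/2 : R) (0 : R) (1/2 : R) | W (1/2 : R) (0 : R) (0 : R) (1/2 : R) ].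

Lemma meet_all (i j : 'I_7) : i != j -> ~~ ((val i == 0%N) && (val j == 1%N)) ->
  ~~ ((val i == 1%N) && (val j == 0%N)) -> hyps_meet (@E R i) (@E R j).
Proof.
case: i => [[|[|[|[|[|[|[|i]]]]]]] Hi] //; case: j => [[|[|[|[|[|[|[|j]]]]]]] Hj] //= _ _ _.
all: WW.
Qed.

Lemma irred : irredundant_polytope (E : 'I_7 -> 'rV[R]_5).
Proof.
split.
  have [|x [k [hk [hx hl]]]] := @klein_wit (1/8) (1/8) (1/4) (1/2); first by rewrite /qq; lra.
  exists x; split => // i; rewrite hl pmulr_rlt0 ?mulr_gt0 ?cc_gt0 //.
  by case: i => [[|[|[|[|[|[|[|i]]]]]]] Hi] //=; lra.
have F : forall (i : 'I_7) y0 y1 z s, 0 < qq y0 y1 z s -> LL i y0 y1 z s 1 = 0 ->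
   (forall j : 'I_7, j != i -> LL j y0 y1 z s 1 < 0) ->
   exists x, H4 x /\ lor x (@E R i) = 0 /\ forall j, j != i -> lor x (@E R j) < 0.
  move=> i y0 y1 z s hq hi hj; have [x [k [hk [hx hl]]]] := klein_wit hq.
  exists x; split => //; split; first by rewrite hl hi mulr0.
  by move=> j hji; rewrite hl pmulr_rlt0 ?mulr_gt0 ?cc_gt0 // hj.
case=> [[|[|[|[|[|[|[|i]]]]]]] Hi] //.
- apply: (F _ (1/8) (1/8) 0 (1/2)); rewrite ?/qq /=; try lra.
  by case=> [[|[|[|[|[|[|[|j]]]]]]] Hj] //= _; lra.
- apply: (F _ (1/8) (1/8) (1/2) (1/2)); rewrite ?/qq /=; try lra.
  by case=> [[|[|[|[|[|[|[|j]]]]]]] Hj] //= _; lra.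
- apply: (F _ (1/2) (1/8) (1/4) (3/4)); rewrite ?/qq /=; try lra.
  by case=> [[|[|[|[|[|[|[|j]]]]]]] Hj] //= _; lra.
- apply: (F _ 0 (1/8) (1/4) (1/2)); rewrite ?/qq /=; try lra.
  by case=> [[|[|[|[|[|[|[|j]]]]]]] Hj] //= _; lra.
- apply: (F _ (1/4) (1/4) (1/4) (1/2)); rewrite ?/qq /=; try lra.
  by case=> [[|[|[|[|[|[|[|j]]]]]]] Hj] //= _; lra.
- apply: (F _ (1/8) 0 (1/4) (1/2)); rewrite ?/qq /=; try lra.
  by case=> [[|[|[|[|[|[|[|j]]]]]]] Hj] //= _; lra.
- apply: (F _ (1/10) (1/3) (1/2) 1); rewrite ?/qq /=; try lra.
  by case=> [[|[|[|[|[|[|[|j]]]]]]] Hj] //= _; lra.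
Qed.

End S.

Set Implicit Arguments. Unset Strict Implicit.
Section S.
Variable R : realType.
Local Notation "x @@ k" := (x ord0 (inord k)) (at level 8).
Ltac sq := (field: (@s2sq R) (@s3sq R)); try done.

Lemma cos2 : cos (pi / 2%:R) = 0 :> R.
Proof. exact: cos_pihalf. Qed.

Lemma cos4 : cos (pi / 4%:R) = s2 / 2 :> R.
Proof.
set c := cos (pi / 4%:R).
have h1 : c ^+ 2 *+ 2 - 1 = 0.
  rewrite -cos_mulr2n -[X in _ = X]cos2; congr cos; by rewrite mulr2n; field.
have hp := @pi_gt0 R.
have h2 : 0 < c by apply: cos_gt0_pihalf; apply/andP; split; lra.
have h3 := @s2sq R; have h4 := @s2gt0 R.
rewrite mulr2n in h1.
have : (c - s2 / 2) * (c + s2 / 2) = 0 by rewrite -subr_sqr; lra.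
move/eqP; rewrite mulf_eq0 => /orP [/eqP|/eqP]; lra.
Qed.

Lemma cos6 : cos (pi / 6%:R) = s3 / 2 :> R.
Proof.
set x := pi / 6%:R; set c := cos x.
have hp := @pi_gt0 R.
have h1 : cos (x + x *+ 2) = 0.
  rewrite -[X in _ = X]cos2; congr cos; by rewrite mulr2n /x; field.
rewrite cosD cos_mulr2n sin_mulr2n -/c in h1.
have hs := sin2cos2 x.
have h2 : 0 < c by apply: cos_gt0_pihalf; apply/andP; split; rewrite /x; lra.
have h1' : c * (4 * c ^+ 2 - 3) = 0.
  have hs2 : c * sin x ^+ 2 = c * (1 - c ^+ 2) by rewrite hs.
  rewrite !mulr2n in h1; lra.
move/eqP: h1'; rewrite mulf_eq0 (gt_eqF h2) /= => /eqP h5.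
have h3 := @s3sq R; have h4 := @s3gt0 R.
have : (c - s3 / 2) * (c + s3 / 2) = 0 by rewrite -subr_sqr; lra.
move/eqP; rewrite mulf_eq0 => /orP [/eqP|/eqP]; lra.
Qed.

End S.

Set Implicit Arguments. Unset Strict Implicit.
Section S.
Variable R : realType.
Local Notation "x @@ k" := (x ord0 (inord k)) (at level 8).
Ltac sq := (field: (@s2sq R) (@s3sq R)); try done.

Lemma not_meet01 : ~ hyps_meet (@E R (inord 0)) (E (inord 1)).
Proof.
move=> [x [[hx _] [h0 h1]]].
move: hx h0 h1; rewrite (cpE x) !lor_cp_E lor_cp_cp /= !inordK //=.
set a := x@@0; set b := x@@1; set z := x@@2 / hh; set s := x@@4 - x@@3.
have := @hh_gt0 R => hp.
move=> hx /eqP; rewrite mulf_eq0 (gt_eqF hp) /= oppr_eq0 => /eqP hz.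
move/eqP; rewrite mulf_eq0 (gt_eqF hp) /= hz sub0r oppr_eq0 => /eqP hs.
move: hx; rewrite hz hs; nra.
Qed.

Definition vv : 'rV[R]_5 := cp 0 0 0 0 1.

Lemma tang01 : tangent_at_infinity (@E R (inord 0)) (E (inord 1)).
Proof.
split; first exact: not_meet01.
exists vv; rewrite /vv /ideal_bdry /= !lor_cp_E lor_cp_cp /= !inordK //=.
split; last by split; ring.
split; first by ring.
rewrite /cp; case: (mk5E 0 0 (hh * 0) (1 - 0) (1:R)) => _ _ _ _ ->; lra.
Qed.

Lemma angles (i j : 'I_7) : i != j ->
  match Dpaper i j with
  | Some m => meet_at_angle (@E R i) (E j) (pi / m%:R)
  | None => tangent_at_infinity (@E R i) (E j)
  end.
Proof.
move=> hij.
have M : ~~ ((val i == 0%N) && (val j == 1%N)) -> ~~ ((val i == 1%N) && (val j == 0%N)) ->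
  hyps_meet (@E R i) (E j) by exact: meet_all.
move: hij M.
case: i => [[|[|[|[|[|[|[|i]]]]]]] Hi] //; case: j => [[|[|[|[|[|[|[|j]]]]]]] Hj] //= _ M;
  rewrite /Dpaper /=.
all: try (split; [by apply: M | rewrite ?cos2 ?cos4 ?cos6 /E /= ?/e0 ?/e1 ?/e2 ?/e3 ?/e4 ?/e5 ?/e6 lor_mk5 ?/hh; sq]).
- have -> : Ordinal Hi = inord 0 by apply/val_inj; rewrite /= inordK.
  have -> : Ordinal Hj = inord 1 by apply/val_inj; rewrite /= inordK.
  exact: tang01.
- have -> : Ordinal Hi = inord 1 by apply/val_inj; rewrite /= inordK.
  have -> : Ordinal Hj = inord 0 by apply/val_inj; rewrite /= inordK.
  have [h1 [v [hv [h2 h3]]]] := tang01.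
  split; first by move=> /hyps_meetC.
  by exists v.
Qed.
End S.

Set Implicit Arguments. Unset Strict Implicit.
Section S.
Variable R : realType.
Local Notation "x @@ k" := (x ord0 (inord k)) (at level 8).

Lemma key (y0 y1 z s : R) :
  0 <= y0 -> 0 <= y1 -> 0 <= z -> y0 + y1 <= s -> z <= s ->
  3 * y0 + 2 * s <= 3 -> 3 * y1 + 2 * z + s <= 3 ->
  s <= 10 * qq y0 y1 z s.
Proof. rewrite /qq => *. nra. Qed.

Lemma klein_liftE (p : R * R * R * R) :
  klein_lift p = cp p.1.1.1 p.1.1.2 (p.1.2 / hh) (1 - p.2) 1.
Proof.
apply/rowP => k; rewrite /klein_lift /cp /mk5 !mxE.
case: k => [[|[|[|[|[|k]]]]] Hk] //=.
- by rewrite mulrC divfK // gt_eqF // hh_gt0.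
- by ring.
Qed.

Lemma LL_le0 (a b z s t : R) :
  (forall i : 'I_7, lor (cp a b z s t) (E i) <= 0) ->
  [/\ 0 <= z, z <= s, 3 * a + 2 * s <= 3 * t, 0 <= a &
   [/\ a + b <= s, 0 <= b & 3 * b + 2 * z + s <= 3 * t]].
Proof.
move=> h.
have H (i : 'I_7) : LL i a b z s t <= 0.
  by move: (h i); rewrite lor_cp_E pmulr_rle0 // cc_gt0.
have := H (inord 0); have := H (inord 1); have := H (inord 2); have := H (inord 3).
have := H (inord 4); have := H (inord 5); have := H (inord 6).
rewrite /LL !inordK //= => *.
split; try lra; split; lra.
Qed.

Lemma shell_ex (s : R) : 0 < s -> s <= 2 ->
  exists n : nat, 2 / 4 ^+ n.+1 < s /\ s <= 2 / 4 ^+ n.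
Proof.
move=> s0 s2.
have P : forall N : nat, 2 / 4 ^+ N < s -> exists n : nat, 2 / 4 ^+ n.+1 < s /\ s <= 2 / 4 ^+ n.
  elim=> [|N IH]; first by rewrite expr0 divr1; lra.
  move=> hN; case: (ltrP (2 / 4 ^+ N) s) => h; first exact: IH.
  by exists N.
apply: (P (Num.bound (2 / s))).
have hb := archi_boundP (ltW (divr_gt0 (ltr0Sn _ 1) s0)).
set N := Num.bound (2 / s) in hb *.
have hN : (N%:R : R) <= 4 ^+ N.
  rewrite -(natrX R 4 N) ler_nat; apply: ltnW; exact: ltn_expl.
have h4 : 0 < (4 : R) ^+ N by rewrite exprn_gt0.
rewrite ltr_pdivrMr // mulrC -ltr_pdivrMr //.
exact: lt_le_trans hb hN.
Qed.

End S.

Set Implicit Arguments. Unset Strict Implicit.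
Section S.
Variable R : realType.

Definition I (a b : R) : set R := [set` `[a, b]].

Lemma leb_I (a b : R) : a <= b -> (@lebesgue_measure R) (I a b) = (b - a)%:E.
Proof.
move=> ab; rewrite /I lebesgue_measure_itv /=.
case: ifPn => [_|]; first by rewrite -EFinD.
rewrite lte_fin -leNgt => ba.
have -> : b = a by apply/eqP; rewrite eq_le ab ba.
by rewrite subrr.
Qed.

Definition box (a b c d e f g h : R) : set (R * R * R * R) :=
  ((I a b `*` I c d) `*` I e f) `*` I g h.

Lemma box_meas (a b c d e f g h : R) : measurable (box a b c d e f g h).
Proof.
by rewrite /box; apply: measurableX; [apply: measurableX; [apply: measurableX|]|]; exact: measurable_itv.
Qed.

Lemma leb4_box (a b c d e f g h : R) : a <= b -> c <= d -> e <= f -> g <= h ->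
  leb4 (box a b c d e f g h) = ((b - a) * (d - c) * (f - e) * (h - g))%:E.
Proof.
move=> *; rewrite /leb4 /box.
have mI : forall x y : R, measurable (I x y) by move=> x y; exact: measurable_itv.
have m2 : measurable (I a b `*` I c d) by apply: measurableX.
have m3 : measurable (I a b `*` I c d `*` I e f) by apply: measurableX.
rewrite product_measure1E //; last exact: mI.
transitivity (lebesgue_measure (I a b) * lebesgue_measure (I c d) * lebesgue_measure (I e f) *
   lebesgue_measure (I g h))%E.
  congr (_ * _)%E.
  transitivity ((lebesgue_measure \x lebesgue_measure)%E (I a b `*` I c d) * lebesgue_measure (I e f))%E.
    by apply: product_measure1E; [exact: m2|exact: mI].
  by congr (_ * _)%E; apply: product_measure1E; exact: mI.
by rewrite !leb_I // -!EFinM.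
Qed.

Lemma le_int_T (f g : R * R * R * R -> \bar R) :
  (forall x, (0 <= f x)%E) -> (forall x, (f x <= g x)%E) ->
  (\int[@leb4 R]_x f x <= \int[@leb4 R]_x g x)%E.
Proof.
move=> f0 fg.
have g0 : forall x, (0 <= g x)%E by move=> x; exact: le_trans (f0 x) (fg x).
rewrite !ge0_integralTE //; apply: le_ereal_sup => _ [h hf <-]; exists h => //= x.
exact: le_trans (hf x) (fg x).
Qed.

End S.

Set Implicit Arguments. Unset Strict Implicit.
Section S.
Variable R : realType.
Local Notation "x @@ k" := (x ord0 (inord k)) (at level 8).

Lemma dens_le (q T : R) : 0 < T -> 1 / (32 * T ^+ 2) <= q ->
  (Num.sqrt (q ^+ 5))^-1 <= 2 ^+ 13 * T ^+ 5.
Proof.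
move=> T0 hq.
have q0 : 0 < q by apply: lt_le_trans hq; rewrite divr_gt0 // mulr_gt0 // exprn_gt0.
have h1 : (1 / (32 * T ^+ 2)) ^+ 5 <= q ^+ 5.
  by apply: lerXn2r; rewrite // ?nnegrE ?divr_ge0 ?mulr_ge0 ?exprn_ge0 ?ltW.
have T10 : 0 < T ^+ 10 by rewrite exprn_gt0.
have p2 : 0 < (2:R) ^+ 25 by rewrite exprn_gt0.
have h2 : (1 / (2 ^+ 13 * T ^+ 5)) ^+ 2 <= (1 / (32 * T ^+ 2)) ^+ 5.
  have -> : (1 / (2 ^+ 13 * T ^+ 5)) ^+ 2 = (2 * 2 ^+ 25 * T ^+ 10)^-1.
    rewrite expr_div_n expr1n exprMn div1r -!exprM -exprS. reflexivity.
  have -> : (1 / (32 * T ^+ 2)) ^+ 5 = (2 ^+ 25 * T ^+ 10)^-1.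
    have -> : (32:R) = 2 ^+ 5 by rewrite !exprS expr0; ring.
    by rewrite expr_div_n expr1n exprMn div1r -!exprM.
  rewrite lef_pV2 ?posrE ?mulr_gt0 //.
  rewrite ler_pM2r // ler_pMl //; lra.
have h3 : 1 / (2 ^+ 13 * T ^+ 5) <= Num.sqrt (q ^+ 5).
  have -> : 1 / (2 ^+ 13 * T ^+ 5) = Num.sqrt ((1 / (2 ^+ 13 * T ^+ 5)) ^+ 2).
    by rewrite sqrtr_sqr ger0_norm ?divr_ge0 ?mulr_ge0 ?exprn_ge0 ?ltW.
  rewrite ler_sqrt; first exact: le_trans h2 h1.
  by rewrite exprn_ge0 // ltW.
have h4 : 0 < 1 / (2 ^+ 13 * T ^+ 5) by rewrite divr_gt0 // mulr_gt0 // exprn_gt0.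
have -> : 2 ^+ 13 * T ^+ 5 = (1 / (2 ^+ 13 * T ^+ 5))^-1 by rewrite div1r invrK.
by rewrite lef_pV2 // posrE; apply: lt_le_trans h3.
Qed.

End S.

Set Implicit Arguments. Unset Strict Implicit.
Section S.
Variable R : realType.
Local Notation "x @@ k" := (x ord0 (inord k)) (at level 8).

Lemma geo_fin (c r : R) : 0 <= r < 1 -> (\sum_(n <oo) (c * r ^+ n)%:E < +oo)%E.
Proof.
move=> /andP [r0 r1].
have cv : cvgn (series (geometric c r)).
  by apply/cvg_ex; eexists; apply: cvg_geometric_series; rewrite ger0_norm.
have -> : (\sum_(n <oo) (c * r ^+ n)%:E)%E = limn (EFin \o series (geometric c r)).
  congr (limn _); apply/funext => N /=.
  by rewrite /series /= -sumEFin.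
by rewrite EFin_lim // ltry.
Qed.

Definition TT (n : nat) : R := 2 ^+ n.
Definition Bx (n : nat) := box 0 (2 / TT n ^+ 2) 0 (2 / TT n ^+ 2) 0 (2 / TT n ^+ 2)
   (1 - 2 / TT n ^+ 2) (1 - 1 / (2 * TT n ^+ 2)).
Definition Mn (n : nat) : R := 2 ^+ 13 * TT n ^+ 5.
Definition uu (n : nat) (p : R * R * R * R) : \bar R := (Mn n * \1_(Bx n) p)%:E.

Lemma TT_gt0 n : 0 < TT n. Proof. by rewrite exprn_gt0. Qed.

Lemma uu_ge0 n p : (0 <= uu n p)%E.
Proof. by rewrite lee_fin mulr_ge0 // ?indicE ?ler0n // mulr_ge0 // exprn_ge0 // ltW // TT_gt0. Qed.



Lemma int_uu n : (\int[@leb4 R]_x uu n x = ((12 * 2 ^+ 13) * (1/8) ^+ n)%:E)%E.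
Proof.
have T0 := TT_gt0 n.
have M0 : 0 <= Mn n by rewrite mulr_ge0 // exprn_ge0 // ltW.
rewrite /uu; etransitivity.
  apply: (@integralZl_indic _ _ _ (@leb4 R) setT measurableT (fun=> Bx n) (Mn n)).
    by move=> h; exfalso; move: h; rewrite ltNge M0.
  exact: box_meas.
rewrite /=.
have -> : (\int[@leb4 R]_x (\1_(Bx n) x)%:E = @leb4 R (Bx n `&` setT))%E.
  exact: (@integral_indic _ _ _ (@leb4 R) setT measurableT (Bx n) (box_meas _ _ _ _ _ _ _ _)).
rewrite setIT leb4_box; last first.
- apply: lerB => //; rewrite -subr_ge0.
  have -> : 2 / TT n ^+ 2 - 1 / (2 * TT n ^+ 2) = (3/2) / TT n ^+ 2.
    by field; rewrite expf_neq0 // gt_eqF.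
  by rewrite divr_ge0 // exprn_ge0 // ltW.
- by rewrite divr_ge0 // exprn_ge0 // ltW.
- by rewrite divr_ge0 // exprn_ge0 // ltW.
- by rewrite divr_ge0 // exprn_ge0 // ltW.
rewrite -EFinM; congr EFin.
have -> : (1 / 8 : R) ^+ n = (TT n ^+ 3)^-1.
  rewrite /TT -exprM mulnC exprM div1r exprVn; congr (_^-1).
  by congr (_ ^+ n); rewrite !exprS expr0; ring.
rewrite /Mn; field.
by rewrite expf_neq0 // gt_eqF.
Qed.

Lemma sum_uu_fin : (\sum_(n <oo) \int[@leb4 R]_x uu n x < +oo)%E.
Proof.
under eq_eseriesr do rewrite int_uu.
apply: geo_fin; apply/andP; split; lra.
Qed.

End S.
Arguments TT {R}. Arguments Bx {R}. Arguments Mn {R}. Arguments uu {R}.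

Set Implicit Arguments. Unset Strict Implicit.
Section S.
Variable R : realType.
Local Notation "x @@ k" := (x ord0 (inord k)) (at level 8).

Lemma hh_lt1 : hh < 1 :> R.
Proof.
have h0 := @hh_gt0 R.
have : hh ^+ 2 = 2 / 3 :> R by rewrite /hh; field: (@s2sq R) (@s3sq R).
move=> h2; nra.
Qed.

Lemma dens_dom (p : R * R * R * R) : klein_set E p ->
  exists n, Bx n p /\ klein_density p <= Mn n.
Proof.
move=> [hneg hE].
move: hneg hE; rewrite /klein_density klein_liftE lor_cp_cp => hneg hE.
have [h0 h1 h2 h3 [h4 h5 h6]] := LL_le0 hE.
set a := p.1.1.1 in hneg h0 h1 h2 h3 h4 h5 h6 *.
set b := p.1.1.2 in hneg h0 h1 h2 h3 h4 h5 h6 *.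
set z := p.1.2 / hh in hneg h0 h1 h2 h3 h4 h5 h6 *.
set s := 1 - p.2 in hneg h0 h1 h2 h3 h4 h5 h6 *.
have h2' : 3 * a + 2 * s <= 3 by lra.
have h6' : 3 * b + 2 * z + s <= 3 by lra.
have hk := key h3 h5 h0 h4 h1 h2' h6'.
have hq : - (a ^+ 2 + b ^+ 2 + 2 / 3 * z ^+ 2 + s ^+ 2 - 2 * 1 * s) = qq a b z s.
  by rewrite /qq; ring.
have qpos : 0 < qq a b z s by rewrite -hq oppr_gt0.
have s0 : 0 < s by move: qpos; rewrite /qq => ?; nra.
have s2 : s <= 2 by lra.
have [n [hn1 hn2]] := shell_ex s0 s2.
have T0 := @TT_gt0 R n.
have e4 : (4 : R) ^+ n = (@TT R n) ^+ 2.
  by rewrite /TT -exprM mulnC exprM; congr (_ ^+ n); rewrite expr2; ring.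
set w := ((@TT R n) ^+ 2)^-1.
have w0 : 0 < w by rewrite invr_gt0 exprn_gt0.
have E1 : 2 / 4 ^+ n.+1 = w / 2 :> R.
  by rewrite exprS e4 /w; field; rewrite expf_neq0 // gt_eqF.
have E2 : 2 / 4 ^+ n = 2 * w :> R by rewrite e4 /w mulrC.
rewrite E1 in hn1; rewrite E2 in hn2.
exists n; split.
  have hz : p.1.2 = hh * z by rewrite /z mulrC divfK // gt_eqF // hh_gt0.
  have hh1 := hh_lt1; have hh0 := @hh_gt0 R.
  have E3 : 2 / (@TT R n) ^+ 2 = 2 * w by rewrite /w.
  have E4 : 1 / (2 * (@TT R n) ^+ 2) = w / 2.
    by rewrite /w; field; rewrite expf_neq0 // gt_eqF.
  rewrite /Bx /box /I /= E3 E4 !in_itv /=.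
  have hz2 : 0 <= hh * z <= 2 * w by apply/andP; split; nra.
  rewrite -hz in hz2; rewrite hz2.
  have -> : 0 <= a <= 2 * w by apply/andP; split; lra.
  have -> : 0 <= b <= 2 * w by apply/andP; split; lra.
  have -> : 1 - 2 * w <= p.2 <= 1 - w / 2 by apply/andP; split; rewrite /s in hn1 hn2; lra.
  by [].
rewrite hq /Mn; apply: dens_le => //.
have -> : 1 / (32 * (@TT R n) ^+ 2) = w / 32 by rewrite /w; field; rewrite expf_neq0 // gt_eqF.
lra.
Qed.

End S.

Set Implicit Arguments. Unset Strict Implicit.
Section S.
Variable R : realType.

Lemma fin_vol : finite_volume (@E R).
Proof.
rewrite /finite_volume /hvolume integral_mkcond.
have G0 : forall x, (0 <= \sum_(n <oo) @uu R n x)%E.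
  by move=> x; apply: nneseries_ge0 => n _ _; exact: uu_ge0.
apply: (le_lt_trans (le_int_T (g := fun x => (\sum_(n <oo) @uu R n x)%E) _ _)).
- move=> x; rewrite /patch; case: ifP => // _.
  by rewrite lee_fin /klein_density invr_ge0 sqrtr_ge0.
- move=> x; rewrite /patch; case: ifPn => [/set_mem hx|_]; last exact: G0.
  have [n [hB hd]] := dens_dom hx.
  apply: (@le_trans _ _ (uu n x)).
    by rewrite /uu indicE mem_set // mulr1 lee_fin.
  apply: le_trans (nneseries_lim_ge n.+1 _).
    rewrite big_nat_recr //=; apply: leeDr; apply: sume_ge0 => i _; exact: uu_ge0.
  by move=> i _ _; exact: uu_ge0.
rewrite integral_nneseries //.
- exact: sum_uu_fin.
- move=> n; apply/measurable_realfun.measurable_EFinP; apply: measurable_realfun.measurable_funM; first exact: measurable_cst.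
  apply: measurable_realfun.measurable_indic; exact: box_meas.
- by move=> n x _; exact: uu_ge0.
Qed.

End S.

Set Implicit Arguments. Unset Strict Implicit.
Section S.
Variable R : realType.
Local Notation "x @@ k" := (x ord0 (inord k)) (at level 8).

Definition v0 : 'rV[R]_5 := cp 0 0 0 0 1.

Lemma closure_coords (x : 'rV[R]_5) : klein_closure E x ->
  [/\ x = cp (x@@0) (x@@1) (x@@2 / hh) (1 - x@@3) 1,
      lor x x = - qq (x@@0) (x@@1) (x@@2 / hh) (1 - x@@3) &
   [/\ 0 <= x@@2 / hh, x@@2 / hh <= 1 - x@@3, 3 * x@@0 + 2 * (1 - x@@3) <= 3, 0 <= x@@0 &
   [/\ x@@0 + x@@1 <= 1 - x@@3, 0 <= x@@1 & 3 * x@@1 + 2 * (x@@2 / hh) + (1 - x@@3) <= 3]]].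
Proof.
move=> [h4 [hxx hE]].
have ex : x = cp (x@@0) (x@@1) (x@@2 / hh) (1 - x@@3) 1 by rewrite {1}(cpE x) h4.
rewrite ex in hE.
have [? ? ? ? [? ? ?]] := LL_le0 hE.
split => //.
  by rewrite {1 2}ex lor_cp_cp /qq; ring.
by split; try lra; split; lra.
Qed.

Lemma closure_v0 (x : 'rV[R]_5) : klein_closure E x -> 1 - x@@3 <= 0 -> x = v0.
Proof.
move=> hx hs; have [ex _ [? ? ? ? [? ? ?]]] := closure_coords hx.
rewrite ex /v0.
have -> : x@@0 = 0 by lra.
have -> : x@@1 = 0 by lra.
have -> : x@@2 / hh = 0 by lra.
have -> : 1 - x@@3 = 0 by lra.
by [].
Qed.

Lemma closure_s_ge0 (x : 'rV[R]_5) : klein_closure E x -> 0 <= 1 - x@@3.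
Proof. by move=> hx; have [_ _ [? ? ? ? [? ? ?]]] := closure_coords hx; lra. Qed.

Lemma v0_ideal : ideal_vertex E v0.
Proof.
have hv : klein_closure E v0.
  split; first by rewrite /v0 /cp; case: (mk5E 0 0 (hh * 0) (1 - 0) (1:R)).
  split; first by rewrite /v0 lor_cp_cp; lra.
  move=> i; rewrite /v0 lor_cp_E pmulr_rle0 ?cc_gt0 //.
  by case: i => [[|[|[|[|[|[|[|i]]]]]]] Hi] //=; lra.
split => //; split; first by rewrite /v0 lor_cp_cp; ring.
move=> a b t ha hb /andP [t0 t1] hab.
have ea : a@@3 = 1 - (1 - a@@3) by ring.
have eb : b@@3 = 1 - (1 - b@@3) by ring.
have h3 : 1 = t * a@@3 + (1 - t) * b@@3.
  have v03 : v0@@3 = 1.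
    by rewrite /v0 /cp; case: (mk5E 0 0 (hh * 0) (1 - 0) (1:R)) => _ _ _ -> _; rewrite subr0.
  have := congr1 (fun y : 'rV[R]_5 => y@@3) hab.
  by move=> /=; rewrite v03 !mxE.
have sa := closure_s_ge0 ha; have sb := closure_s_ge0 hb.
have sa0 : 1 - a@@3 <= 0 by nra.
have sb0 : 1 - b@@3 <= 0 by nra.
by rewrite (closure_v0 ha sa0) (closure_v0 hb sb0).
Qed.

Lemma v0_unique (w : 'rV[R]_5) : ideal_vertex E w -> w = v0.
Proof.
move=> [hw [hww _]].
have [_ hq [? ? ? ? [? ? ?]]] := closure_coords hw.
have hk := @key R (w@@0) (w@@1) (w@@2 / hh) (1 - w@@3).
apply: closure_v0 => //.
have : qq (w@@0) (w@@1) (w@@2 / hh) (1 - w@@3) = 0 by rewrite -[LHS]opprK -hq hww oppr0.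
move=> q0; rewrite q0 mulr0 in hk; apply: hk => //; lra.
Qed.

End S.
Arguments v0 {R}.

Set Implicit Arguments. Unset Strict Implicit.
Section S.
Variable R : realType.
Local Notation "x @@ k" := (x ord0 (inord k)) (at level 8).

Lemma hh2 : hh ^+ 2 = 2 / 3 :> R.
Proof. by rewrite /hh; field: (@s2sq R) (@s3sq R). Qed.

Lemma lor_cp_v0 (a b z s t : R) : lor (cp a b z s t) v0 = - s.
Proof. by rewrite /v0 /cp lor_mk5; ring. Qed.

Lemma horo_cp (c : R) (x : 'rV[R]_5) : horosphere v0 c x ->
  [/\ x = cp (x@@0) (x@@1) (x@@2 / hh) c (x@@4), 0 < x@@4 &
      2 * x@@4 * c = 1 + c ^+ 2 + x@@0 ^+ 2 + x@@1 ^+ 2 + x@@2 ^+ 2].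
Proof.
move=> [[hxx hx4] hv].
rewrite (cpE x) lor_cp_v0 in hv.
have hc : x@@4 - x@@3 = c by lra.
have ex : x = cp (x@@0) (x@@1) (x@@2 / hh) c (x@@4) by rewrite {1}(cpE x) hc.
split => //.
have h : lor (cp (x@@0) (x@@1) (x@@2 / hh) c (x@@4)) (cp (x@@0) (x@@1) (x@@2 / hh) c (x@@4)) = -1.
  by rewrite -ex.
rewrite lor_cp_cp expr_div_n hh2 in h.
have e : 2 / 3 * (x@@2 ^+ 2 / (2 / 3)) = x@@2 ^+ 2 :> R by field.
rewrite e in h; lra.
Qed.

Definition mk3 (a b c : R) : 'rV[R]_3 := \row_(k < 3) nth 0 [:: a; b; c] k.
Lemma mk3E (a b c : R) : [/\ c0 (mk3 a b c) = a, c1 (mk3 a b c) = b & c2 (mk3 a b c) = c].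
Proof. by rewrite /c0 /c1 /c2 /mk3 !mxE !inordK. Qed.

Definition fmap3 (x : 'rV[R]_5) : 'rV[R]_3 := mk3 (x@@0) (x@@1) (x@@2).

Definition tlift (c : R) (p : 'rV[R]_3) : R := (1 + c ^+ 2 + c0 p ^+ 2 + c1 p ^+ 2 + c2 p ^+ 2) / (2 * c).
Definition hlift (c : R) (p : 'rV[R]_3) : 'rV[R]_5 :=
  mk5 (c0 p) (c1 p) (c2 p) (tlift c p - c) (tlift c p).

Lemma hlift_horo c p : 0 < c -> horosphere v0 c (hlift c p).
Proof.
move=> c0p; rewrite /horosphere /H4 /hlift /=.
case: (mk5E (c0 p) (c1 p) (c2 p) (tlift c p - c) (tlift c p)) => _ _ _ _ ->.
have ht : 2 * c * tlift c p = 1 + c ^+ 2 + c0 p ^+ 2 + c1 p ^+ 2 + c2 p ^+ 2.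
  by rewrite /tlift; field; rewrite gt_eqF.
have tp : 0 < tlift c p.
  rewrite /tlift divr_gt0 // ?mulr_gt0 //.
  have := sqr_ge0 c; have := sqr_ge0 (c0 p); have := sqr_ge0 (c1 p); have := sqr_ge0 (c2 p).
  lra.
split; last by rewrite /v0 /cp lor_mk5; ring.
split => //.
rewrite lor_mk5.
have -> : c0 p * c0 p + c1 p * c1 p + c2 p * c2 p + (tlift c p - c) * (tlift c p - c) -
  tlift c p * tlift c p = c0 p ^+ 2 + c1 p ^+ 2 + c2 p ^+ 2 + c ^+ 2 - 2 * c * tlift c p by ring.
rewrite ht; ring.
Qed.

Lemma fmap3_hlift c p : fmap3 (hlift c p) = p.
Proof.
apply/rowP => k; rewrite /fmap3 /hlift /mk3 mxE.
case: (mk5E (c0 p) (c1 p) (c2 p) (tlift c p - c) (tlift c p)) => -> -> -> _ _.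
rewrite /c0 /c1 /c2.
case: k => [[|[|[|k]]] Hk] //=; congr (p _ _); apply/val_inj; rewrite /= inordK //.
Qed.

Lemma img_eq (A B : Type) (H P : set A) (Q : set B) (f : A -> B) (g : B -> A) :
  (forall p, H (g p)) -> (forall p, f (g p) = p) ->
  (forall x, H x -> (P x <-> Q (f x))) -> f @` (H `&` P) = Q.
Proof.
move=> Hg fg HPQ; apply/seteqP; split.
  by move=> _ [x [Hx Px] <-]; apply/(HPQ x Hx).
move=> p Qp; exists (g p); last exact: fg.
by split; [exact: Hg | apply/(HPQ _ (Hg p)); rewrite fg].
Qed.

Lemma horo_poly (c : R) (x : 'rV[R]_5) : 0 < c < 1/2 -> horosphere v0 c x ->
  (hpoly E x <-> prism c (hh * c) (fmap3 x)) /\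
  (hpoly E x -> lor x (E (inord 2)) < 0 /\ lor x (E (inord 6)) < 0) /\
  (forall i : 'I_7, lor x (E i) = cc i * LL i (x@@0) (x@@1) (x@@2 / hh) c (x@@4)).
Proof.
move=> /andP [c0p c1p] hx.
have [ex x4 hxx] := horo_cp hx.
have hL : forall i : 'I_7, lor x (E i) = cc i * LL i (x@@0) (x@@1) (x@@2 / hh) c (x@@4).
  by move=> i; rewrite {1}ex lor_cp_E.
have hh0 := @hh_gt0 R.
have hz : x@@2 = hh * (x@@2 / hh) by rewrite mulrC divfK // gt_eqF.
have t1 : 1 < x@@4.
  have : 2 * c < 2 * x@@4 * c.
    rewrite hxx.
    have : 0 <= x@@0 ^+ 2 + x@@1 ^+ 2 + x@@2 ^+ 2 by rewrite !addr_ge0 ?sqr_ge0.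
    move=> *; nra.
  move=> h; nra.
have strict : hpoly E x -> lor x (E (inord 2)) < 0 /\ lor x (E (inord 6)) < 0.
  move=> [_ hE]; rewrite ex in hE; have [? ? ? ? [? ? ?]] := LL_le0 hE.
  rewrite !hL !pmulr_rlt0 ?cc_gt0 // /LL !inordK //=; split; lra.
split; last by split.
case: (mk3E (x@@0) (x@@1) (x@@2)) => e0 e1 e2.
change (hpoly E x <-> (0 <= c0 (fmap3 x) /\ 0 <= c1 (fmap3 x) /\ c0 (fmap3 x) + c1 (fmap3 x) <= c /\
   0 <= c2 (fmap3 x) <= hh * c)).
rewrite /hpoly /fmap3 e0 e1 e2.
split.
  move=> [_ hE]; rewrite ex in hE; have [? ? ? ? [? ? ?]] := LL_le0 hE.
  rewrite hz; split => //; split => //; split => //.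
  by apply/andP; split; nra.
move=> [a0 [b0 [ab /andP [z0 zc]]]].
split; first by case: hx.
move=> i; rewrite hL pmulr_rle0 ?cc_gt0 //.
have z0' : 0 <= x@@2 / hh by rewrite divr_ge0 // ltW.
have zc' : x@@2 / hh <= c by rewrite ler_pdivrMr // mulrC.
by case: i => [[|[|[|[|[|[|[|i]]]]]]] Hi] //=; lra.
Qed.

End S.
Arguments fmap3 {R}. Arguments hlift {R}. Arguments tlift {R}. Arguments mk3 {R}.

Set Implicit Arguments. Unset Strict Implicit.
Section S.
Variable R : realType.
Local Notation "x @@ k" := (x ord0 (inord k)) (at level 8).

Lemma facet_LL (c : R) (x : 'rV[R]_5) (i : 'I_7) : 0 < c < 1/2 -> horosphere v0 c x ->
  (facet E i x <-> hpoly E x /\ LL i (x@@0) (x@@1) (x@@2 / hh) c (x@@4) = 0).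
Proof.
move=> hc hx; have [_ [_ hL]] := horo_poly hc hx.
rewrite /facet /= hL; split => -[hp h]; split => //.
  by move/eqP: h; rewrite mulf_eq0 (gt_eqF (@cc_gt0 R _)) /= => /eqP.
by rewrite h mulr0.
Qed.

Lemma link_v0 : link_is_prism E (@v0 R).
Proof.
exists (1/2); split; first lra.
move=> c hc.
have c0p : 0 < c by case/andP: hc.
have hh0 := @hh_gt0 R.
have fE (x : 'rV[R]_5) : [/\ c0 (fmap3 x) = x@@0, c1 (fmap3 x) = x@@1 & c2 (fmap3 x) = x@@2] by exact: mk3E.
have Hg : forall p, horosphere v0 c (hlift c p) by move=> p; exact: hlift_horo.
have Fg := @fmap3_hlift R c.
exists fmap3, c, (hh * c).
split; first by split => //; rewrite mulr_gt0.
split.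
  move=> x y hx hy.
  have [ex _ _] := horo_cp hx; have [ey _ _] := horo_cp hy.
  have x3 : x@@3 = x@@4 - c.
    by rewrite {1}ex /cp; case: (mk5E (x@@0) (x@@1) (hh * (x@@2 / hh)) (x@@4 - c) (x@@4)).
  have y3 : y@@3 = y@@4 - c.
    by rewrite {1}ey /cp; case: (mk5E (y@@0) (y@@1) (hh * (y@@2 / hh)) (y@@4 - c) (y@@4)).
  rewrite /edist3 /horo_dist lorE !mxE x3 y3.
  rewrite !big_ord_recl big_ord0 /fmap3 /mk3 !mxE /=.
  congr Num.sqrt; ring.
split.
  apply/seteqP; split => // p _; exists (hlift c p); [exact: Hg | exact: Fg].
split.
  apply: (img_eq (g := hlift c)) => // x hx.
  by have [hP _] := horo_poly hc hx.
have FI : forall (i : 'I_7) (Q : set 'rV[R]_3),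
   (forall x, horosphere v0 c x -> hpoly E x ->
     (LL i (x@@0) (x@@1) (x@@2 / hh) c (x@@4) = 0 <-> Q (fmap3 x))) ->
   fmap3 @` (horosphere v0 c `&` facet E i) = prism c (hh * c) `&` Q.
  move=> i Q HQ; apply: (img_eq (g := hlift c)) => // x hx.
  have [hP _] := horo_poly hc hx.
  rewrite (facet_LL _ hc hx); split.
    by move=> [hp hl]; split; [exact/hP | exact/(HQ x hx hp)].
  by move=> [hp hq]; have hp' := (iffRL hP hp); split => //; exact/(HQ x hx hp').
have ez : forall x : 'rV[R]_5, x@@2 = hh * (x@@2 / hh).
  by move=> x; rewrite mulrC divfK // gt_eqF.
split.
  apply: FI => x hx hp; rewrite /mkset; have [_ _ ->] := fE x; rewrite /LL inordK //=.
  split => h; last by rewrite h mul0r oppr0.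
  rewrite ez; have -> : x@@2 / hh = 0 by lra.
  by rewrite mulr0.
split.
  apply: FI => x hx hp; rewrite /mkset; have [_ _ ->] := fE x; rewrite /LL inordK //=.
  split => h; first by rewrite ez; have -> : x@@2 / hh = c by lra.
  by rewrite h; field; rewrite gt_eqF.
split.
  apply: FI => x hx hp; rewrite /mkset; have [-> _ _] := fE x; rewrite /LL inordK //=.
  by split => h; lra.
split.
  apply: FI => x hx hp; rewrite /mkset; have [_ -> _] := fE x; rewrite /LL inordK //=.
  by split => h; lra.
split.
  apply: FI => x hx hp; rewrite /mkset; have [-> -> _] := fE x; rewrite /LL inordK //=.
  by split => h; lra.
split.
  apply/seteqP; split => // x [hx [hp h0]].
  have [_ [hS _]] := horo_poly hc hx; have [h2 _] := hS hp; lra.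
apply/seteqP; split => // x [hx [hp h0]].
have [_ [hS _]] := horo_poly hc hx; have [_ h6] := hS hp; lra.
Qed.

End S.

Set Implicit Arguments. Unset Strict Implicit.
Section S.
Variable R : realType.

Lemma Dpaper_even (i j : 'I_7) m : Dpaper i j = Some m -> [\/ m = 2%N, m = 4%N | m = 6%N].
Proof.
rewrite /Dpaper; case: ifP => _; first by case=> <-; constructor 2.
case: ifP => _; first by case=> <-; constructor 3.
case: ifP => _ //; by case=> <-; constructor 1.
Qed.

Lemma even_E : even_angles_bounded_unbounded (@E R).
Proof.
move=> i j hbi hnbj [x [hxi hxj]].
case: (eqVneq i j) => [eij | nij].
  by subst j; exfalso; exact: hnbj.
have := angles R nij.
case hD : (Dpaper i j) => [m|].
  move=> ha; case: (Dpaper_even hD) => hm; subst m.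
  - by exists 1%N.
  - by exists 2%N.
  - by exists 3%N.
move=> [hnm _]; exfalso; apply: hnm.
by exists x; case: hxi => [[hx _] h1]; case: hxj => _ h2.
Qed.

End S.


Theorem proposition3p1 (R : realType) :
  exists e : 'I_7 -> 'rV[R]_5,
    [/\ coxeter_polytope_with_diagram e Dpaper,
        finite_volume e,
        (exists v, [/\ ideal_vertex e v,
                       (forall w, ideal_vertex e w -> w = v) &
                       link_is_prism e v]) &
        even_angles_bounded_unbounded e].
Proof.
exists (@E R); split.
- split; first by move=> i; exact: E_unit.
  split; first exact: irred.
  exact: angles.
- exact: fin_vol.
- exists v0; split; [exact: v0_ideal | exact: v0_unique | exact: link_v0].
- exact: even_E.
Qed.
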